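(* Let $(L,\preceq)$ be a lattice and $\delta$ a local congruence on $L$. Then the relation $\preceq_\delta$ on $L/\delta$ is a partial order if and only if every $\delta$-cycle in $L$ is closed.
   Context: For an equivalence relation $\delta$ on $L$, $[a]_\delta$ is the class of $a$ and $L/\delta$ the set of classes. A local congruence on a lattice $(L,\preceq)$ is an equivalence relation each of whose classes is a sublattice of $L$ and is convex (if $u,v$ are in the class and $u\preceq w\preceq v$, then $w$ is in the class). A $\delta$-sequence from $p_0$ to $p_n$ is a finite sequence $(p_0,p_1,\dots,p_n)$ of elements of $L$ with $n\ge1$ such that for each $i\in\{1,\dots,n\}$ either $(p_{i-1},p_i)\in\delta$ or $p_{i-1}\preceq p_i$. A $\delta$-cycle is a $\delta$-sequence $(p_0,\dots,p_n)$ with $p_0=p_n$; it is closed if $[p_0]_\delta=[p_1]_\delta=\dots=[p_n]_\delta$. The relation $\preceq_\delta$ on $L/\delta$ is defined by $[x]_\delta\preceq_\delta[y]_\delta$ iff there exists a $\delta$-sequence from some $x'\in[x]_\delta$ to some $y'\in[y]_\delta$ (it is always a preorder). *)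

(* Defs.v *)
From mathcomp Require Import all_boot all_order.
Set Implicit Arguments. Unset Strict Implicit. Unset Printing Implicit Defensive.
Import Order.TTheory.
Local Open Scope order_scope.

Section LocalCongruence.
Context {disp : Order.disp_t} {L : latticeType disp}.

Definition equivalence_rel (delta : L -> L -> Prop) : Prop :=
  (forall x, delta x x) /\
  (forall x y, delta x y -> delta y x) /\
  (forall x y z, delta x y -> delta y z -> delta x z).

Definition eclass (delta : L -> L -> Prop) (a : L) : L -> Prop := delta a.

Definition local_congruence (delta : L -> L -> Prop) : Prop :=
  equivalence_rel delta /\
  (forall a u v, eclass delta a u -> eclass delta a v ->
       eclass delta a (Order.meet u v) /\ eclass delta a (Order.join u v)) /\
  (forall a u v w, eclass delta a u -> eclass delta a v ->
       u <= w -> w <= v -> eclass delta a w).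

Fixpoint dsteps (delta : L -> L -> Prop) (x : L) (s : seq L) : Prop :=
  match s with
  | [::] => True
  | y :: s' => (delta x y \/ x <= y) /\ dsteps delta y s'
  end.

(* (x :: s) is a delta-sequence (n = size s >= 1) from x to last x s *)
Definition delta_sequence (delta : L -> L -> Prop) (x : L) (s : seq L) : Prop :=
  s <> [::] /\ dsteps delta x s.

Definition delta_cycle (delta : L -> L -> Prop) (x : L) (s : seq L) : Prop :=
  delta_sequence delta x s /\ last x s = x.

Definition closed_cycle (delta : L -> L -> Prop) (x : L) (s : seq L) : Prop :=
  forall z, z \in x :: s -> eclass delta z = eclass delta x.

Definition is_class (delta : L -> L -> Prop) (A : L -> Prop) : Prop :=
  exists a, A = eclass delta a.

Definition qle (delta : L -> L -> Prop) (A B : L -> Prop) : Prop :=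
  exists x' y' s, A x' /\ B y' /\ delta_sequence delta x' s /\ last x' s = y'.

Definition quotient_partial_order (delta : L -> L -> Prop) : Prop :=
  (forall A, is_class delta A -> qle delta A A) /\
  (forall A B C, is_class delta A -> is_class delta B -> is_class delta C ->
      qle delta A B -> qle delta B C -> qle delta A C) /\
  (forall A B, is_class delta A -> is_class delta B ->
      qle delta A B -> qle delta B A -> A = B).

End LocalCongruence.

(* Main.v *)
Require Import Defs.
From mathcomp Require Import all_boot all_order.
From Stdlib Require Import FunctionalExtensionality PropExtensionality.

Section Aux.
Context {disp : Order.disp_t} {L : latticeType disp}.

Lemma dsteps_cat (delta : L -> L -> Prop) x s1 s2 :
  dsteps delta x (s1 ++ s2) <-> dsteps delta x s1 /\ dsteps delta (last x s1) s2.
Proof.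
elim: s1 x => [|y s1 IH] x /=; first by tauto.
rewrite IH; tauto.
Qed.

Lemma eclass_eq (delta : L -> L -> Prop) x y :
  Defs.equivalence_rel delta -> delta x y -> eclass delta x = eclass delta y.
Proof.
move=> [Hr [Hs Ht]] Hxy; apply: functional_extensionality => z.
apply: propositional_extensionality; rewrite /eclass; split => H.
- exact: Ht (Hs _ _ Hxy) H.
- exact: Ht Hxy H.
Qed.
End Aux.

Theorem theorem4p7 (disp : Order.disp_t) (L : latticeType disp)
    (delta : L -> L -> Prop) :
  local_congruence delta ->
  (quotient_partial_order delta <->
   (forall (x : L) (s : seq L), delta_cycle delta x s -> closed_cycle delta x s)).
Proof.
move=> [Heq _]; have Heq' := Heq; move: Heq' => [Hr [Hs Ht]].
split.
- move=> [_ [_ Hanti]] x s [[Hne Hst] Hlast] z.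
  rewrite in_cons => /orP [/eqP -> //|Hz].
  case/splitPr: Hz Hst Hne Hlast => s1 s2.
  rewrite dsteps_cat /= last_cat /= => [[Hs1 [Hstep Hs2]]] _ Hlast.
  case: s2 Hs2 Hlast => [|w s2] Hs2 Hlast.
    by rewrite /= in Hlast; rewrite Hlast.
  symmetry; apply: Hanti.
  + by exists x.
  + by exists z.
  + exists x, z, (rcons s1 z); split; first exact: Hr.
    split; first exact: Hr.
    split; last by rewrite last_rcons.
    split; first by case: s1 {Hs1 Hstep}.
    by rewrite -cats1 dsteps_cat /=.
  + exists z, x, (w :: s2); split; first exact: Hr.
    split; first exact: Hr.
    by split.
- move=> Hcyc; split; [|split].
  + move=> A [a ->]; exists a, a, [:: a]; split; first exact: Hr.
    split; first exact: Hr.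
    split => //; split => //=; split => //; by right.
  + move=> A B C [a ->] [b ->] [c ->].
    move=> [x1 [y1 [s1 [Hx1 [Hy1 [[Hne1 Hst1] Hl1]]]]]].
    move=> [x2 [y2 [s2 [Hx2 [Hy2 [[Hne2 Hst2] Hl2]]]]]].
    exists x1, y2, (s1 ++ x2 :: s2); split => //; split => //.
    split; last by rewrite last_cat /= Hl2.
    split; first by case: s1 {Hst1 Hl1 Hne1}.
    rewrite dsteps_cat /= Hl1; split => //; split => //.
    left; rewrite /eclass in Hx2 Hy1; exact: Ht (Hs _ _ Hy1) Hx2.
  + move=> A B [a ->] [b ->].
    move=> [x1 [y1 [s1 [Hx1 [Hy1 [[Hne1 Hst1] Hl1]]]]]].
    move=> [y2 [x2 [s2 [Hy2 [Hx2 [[Hne2 Hst2] Hl2]]]]]].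
    rewrite /eclass in Hx1 Hy1 Hx2 Hy2.
    have Hc : delta_cycle delta x1 (s1 ++ y2 :: rcons s2 x1).
      split; last by rewrite last_cat /= last_rcons.
      split; first by case: s1 {Hst1 Hl1 Hne1}.
      rewrite dsteps_cat /= Hl1; split => //; split.
        left; exact: Ht (Hs _ _ Hy1) Hy2.
      rewrite -cats1 dsteps_cat /= Hl2; split => //; split => //.
      left; exact: Ht (Hs _ _ Hx2) Hx1.
    have Hy1in : y1 \in x1 :: (s1 ++ y2 :: rcons s2 x1).
      case: s1 Hne1 Hl1 {Hst1 Hc} => [//|w s1] _ Hl1.
      by rewrite -Hl1 /= in_cons -cat_cons mem_cat mem_last orbT.
    have E := Hcyc _ _ Hc _ Hy1in.
    change (eclass delta a = eclass delta b).
    rewrite (eclass_eq delta a x1 Heq Hx1) (eclass_eq delta b y1 Heq Hy1) E.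
    done.
Qed.
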